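(* Let $\varphi_\rho(z)=z\log z$ for $z>0$. In the discrete setting described in the context, let $(\rho_K^{n})_{K\in\mathcal M,\,0\le n\le N}$ be positive, let $(\rho_\sigma^{n+1})_{\sigma\in\mathcal{E}_{\rm int},0\le n\le N-1}$ be face values, and let $u_{K,\sigma}^{n}$ be normal face velocities. For $\sigma=K|L\in\mathcal{E}_{\rm int}$ and $0\le n\le N-1$, let $\rho_{KL}^{n+1}$ be the number $x_{KL}$ associated with $\varphi=\varphi_\rho$, $x_K=\rho_K^{n+1}$, $x_L=\rho_L^{n+1}$, and define \[ (\delta\varphi_\rho)_\sigma^{n+1}=\varphi_\rho(\rho_K^{n+1})-\varphi_\rho(\rho_\sigma^{n+1})+\varphi_\rho'(\rho_K^{n+1})\bigl[\rho_{KL}^{n+1}-\rho_K^{n+1}\bigr]+\tfrac12\bigl[\varphi_\rho'(\rho_K^{n+1})+\varphi_\rho'(\rho_L^{n+1})\bigr]\bigl[\rho_\sigma^{n+1}-\rho_{KL}^{n+1}\bigr] \] (this quantity does not depend on the ordering of $K$ and $L$), and for $K\in\mathcal{M}$, \[ |K|\,(\delta R_m)_K^{n+1}=\sum_{\sigma\in\mathcal{E}(K)\cap\mathcal{E}_{\rm int}}|\sigma|\,(\delta\varphi_\rho)_\sigma^{n+1}u_{K,\sigma}^{n+1}. \] Assume that for every $\sigma=K|L\in\mathcal{E}_{\rm int}$ and $0\le n\le N-1$: $\rho_\sigma^{n+1}\in|\hspace{-0.12em}[\rho_K^{n+1},\rho_{KL}^{n+1}]\hspace{-0.12em}|$ if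 $u_{K,\sigma}^{n+1}\ge0$, and $\rho_\sigma^{n+1}\in|\hspace{-0.12em}[\rho_L^{n+1},\rho_{KL}^{n+1}]\hspace{-0.12em}|$ otherwise. Let $M>1$ and suppose $\rho_K^n\le M$, $1/\rho_K^n\le M$ and $|u_{K,\sigma}^n|\le M$ for all $K\in\mathcal M$, $\sigma\in\mathcal{E}(K)$, $0\le n\le N$. Let $|\varphi_\rho'|_\infty$ be the maximum of $|\varphi_\rho'|$ on $[1/M,M]$. Then \[ \|\delta R_m\|_{-1,1}\le 3\,M\,|\varphi_\rho'|_\infty\,\|\rho\|_{x,BV}\,h_{\mathcal M}. \]
   Context: Setting: $\Omega\subset\mathbb{R}^d$ bounded; $\mathcal{M}$ a regular polytopal mesh of $\Omega$ with faces $\mathcal{E}$, faces of $K$ denoted $\mathcal{E}(K)$, interior faces $\mathcal{E}_{\rm int}$; $\sigma=K|L$ denotes the interior face between $K$ and $L$; $|K|$, $|\sigma|$ are the measures; ${\boldsymbol x}_K$ is the mass center of $K$; $h_{\mathcal M}=\max_{K}{\rm diam}(K)$. Uniform time grid $t_n=n\,\delta t$, $0\le n\le N$, $t_N=T$. Normal velocities satisfy $u_{L,\sigma}^n=-u_{K,\sigma}^n$ for $\sigma=K|L$ and vanish on boundary faces. Notation $|\hspace{-0.12em}[a,b]\hspace{-0.12em}|=[\min(a,b),\max(a,b)]$. The number $x_{KL}$: for a strictly convex continuously differentiable $\varphi$ on an interval $I$ and $x_K,x_L\in I$, $x_{KL}$ is the unique real number in $|\hspace{-0.12em}[x_K,x_L]\hspace{-0.12em}|$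 with $\varphi(x_K)+\varphi'(x_K)(x_{KL}-x_K)=\varphi(x_L)+\varphi'(x_L)(x_{KL}-x_L)$ if $x_K\ne x_L$, and $x_{KL}=x_K=x_L$ otherwise. Norms: for a family $(z_K^n)$, $\|z\|_{x,BV}=\sum_{n}\delta t\sum_{\sigma=K|L\in\mathcal{E}_{\rm int}}|\sigma|\,|z_L^n-z_K^n|$ (sum over all available time indices), and \[ \|z\|_{-1,1}=\sup_{\psi}\frac{1}{\sup_{{\boldsymbol x}\in\Omega,t\in(0,T)}|\nabla\psi({\boldsymbol x},t)|}\Bigl[\sum_{n}\delta t\sum_{K\in\mathcal M}|K|\,z_K^n\,\psi({\boldsymbol x}_K,t_n)\Bigr], \] the supremum being over $\psi\in C^\infty_c([0,T)\times\bar\Omega)$ (with nonzero gradient), and the sum over $n$ over the time indices on which $z$ is defined (here $n=1,\dots,N$). *)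

(* Defs.v *)
From HB Require Import structures.
From mathcomp Require Export all_boot all_order all_algebra.
From mathcomp Require Export all_classical all_reals all_analysis.
Set Implicit Arguments. Unset Strict Implicit. Unset Printing Implicit Defensive.
Import Order.TTheory GRing.Theory Num.Theory.
Import numFieldNormedType.Exports.
Local Open Scope classical_set_scope.
Local Open Scope ring_scope.

Definition enorm (R : realType) (d : nat) (x : 'rV[R]_d) : R :=
  Num.sqrt (\sum_(i < d) x ord0 i ^+ 2).

(* The interval |[a,b]| = [min(a,b), max(a,b)]. *)
Definition inI (R : realType) (a b x : R) : Prop :=
  Num.min a b <= x <= Num.max a b.

(* Each face has
   a first neighbour fK and, if it is an interior face sigma = K|L, a second
   neighbour fL = Some L; boundary faces have fL = None. *)
Record mesh (R : realType) (d : nat) := Mesh {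
  Omega : set 'rV[R]_d;
  cell : finType;
  face : finType;
  cellset : cell -> set 'rV[R]_d;
  faceset : face -> set 'rV[R]_d;
  measK : cell -> R;
  measS : face -> R;
  center : cell -> 'rV[R]_d;
  fK : face -> cell;
  fL : face -> option cell;
  Omega_open : open Omega;
  Omega_bounded : bounded_set Omega;
  cell_open : forall K, open (cellset K);
  cell_convex : forall K x y (l : R), cellset K x -> cellset K y ->
     0 <= l <= 1 -> cellset K (l *: x + (1 - l) *: y);
  cell_sub : forall K, cellset K `<=` Omega;
  cell_disj : forall K L, K != L -> cellset K `&` cellset L = set0;
  cell_cover : \bigcup_(K in [set: cell]) closure (cellset K) = closure Omega;
  measK_pos : forall K, 0 < measK K;
  measS_pos : forall s, 0 < measS s;
  center_in : forall K, cellset K (center K);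
  face_ne : forall s, faceset s !=set0;
  face_subK : forall s, faceset s `<=` closure (cellset (fK s));
  face_subL : forall s L, fL s = Some L -> faceset s `<=` closure (cellset L);
  face_two : forall s, fL s <> Some (fK s);
  face_bnd : forall s, fL s = None -> faceset s `<=` ~` Omega
}.

Section MeshDefs.
Variables (R : realType) (d : nat) (m : mesh R d).

Definition faceof (K : cell m) (s : face m) : bool := (fK s == K) || (fL s == Some K).
Definition int_face (s : face m) : bool := fL s != None.
Definition sigL (s : face m) : cell m := odflt (fK s) (fL s).

Definition diam (K : cell m) : R :=
  sup [set r | exists x y, cellset K x /\ cellset K y /\ r = enorm (x - y)].

Definition hM : R := \big[Num.max/0]_(K : cell m) diam K.

Definition BVnorm (T : R) (N : nat) (z : nat -> cell m -> R) : R :=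
  \sum_(0 <= n < N.+1) (T / N%:R) *
    \sum_(s : face m | int_face s) measS s * `|z n (sigL s) - z n (fK s)|.
End MeshDefs.

Fixpoint iterD (R : realType) (V : normedModType R) (vs : seq V)
  (f : V -> R) : V -> R :=
  match vs with
  | [::] => f
  | v :: vs' => fun x => 'D_v (iterD vs' f) x
  end.

Definition smooth (R : realType) (V : normedModType R) (f : V -> R) : Prop :=
  forall (vs : seq V) (x : V), differentiable (iterD vs f) x.

Section Norms.
Variables (R : realType) (d : nat) (m : mesh R d).

Definition ebase (i : 'I_d) : 'rV[R]_d := delta_mx ord0 i.

Definition gradnorm (psi : ('rV[R]_d * R)%type -> R) (x : 'rV[R]_d) (t : R) : R :=
  Num.sqrt (\sum_(i < d) ('D_((ebase i, 0) : ('rV[R]_d * R)%type) psi (x, t)) ^+ 2).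

Definition gradsup (T : R) (psi : ('rV[R]_d * R)%type -> R) : \bar R :=
  ereal_sup [set r | exists x t, Omega m x /\ 0 < t < T /\ r = (gradnorm psi x t)%:E].

(* psi in C^infty_c([0,T) x closure Omega): restriction of a smooth function
   on R^d x R vanishing for t near T (Omega is bounded). *)
Definition test_fun (T : R) (psi : ('rV[R]_d * R)%type -> R) : Prop :=
  smooth psi /\ exists t0, t0 < T /\ forall x t, t0 <= t -> psi (x, t) = 0.

Definition pairing (T : R) (N : nat) (z : nat -> cell m -> R)
  (psi : ('rV[R]_d * R)%type -> R) : R :=
  \sum_(1 <= n < N.+1) (T / N%:R) *
    \sum_(K : cell m) measK K * z n K * psi (center K, n%:R * (T / N%:R)).

Definition dual_norm (T : R) (N : nat) (z : nat -> cell m -> R) : \bar R :=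
  ereal_sup [set r | exists psi, test_fun T psi /\ (0 < gradsup T psi)%E /\
                       r = (pairing T N z psi / fine (gradsup T psi))%:E].
End Norms.

Section Scheme.
Variables (R : realType).

Definition phirho (z : R) : R := z * ln z.

Definition xKL (phi phi' : R -> R) (a b : R) : R :=
  if a == b then a else
  xget a [set x | inI a b x /\ phi a + phi' a * (x - a) = phi b + phi' b * (x - b)].

Definition phinf (M : R) : R :=
  sup [set r | exists z, M^-1 <= z <= M /\ r = `|derive1 phirho z|].

Variables (d : nat) (m : mesh R d).
Variables (rho : nat -> cell m -> R) (rhos : nat -> face m -> R)
          (u : nat -> cell m -> face m -> R).

Definition rhoKL (n : nat) (s : face m) : R :=
  xKL phirho (derive1 phirho) (rho n (fK s)) (rho n (sigL s)).

Definition dphi (n : nat) (s : face m) : R :=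
  let rK := rho n (fK s) in let rL := rho n (sigL s) in
  let rs := rhos n s in let rKL := rhoKL n s in
  phirho rK - phirho rs + derive1 phirho rK * (rKL - rK)
  + 2^-1 * (derive1 phirho rK + derive1 phirho rL) * (rs - rKL).

Definition dR (n : nat) (K : cell m) : R :=
  (measK K)^-1 *
    \sum_(s : face m | faceof K s && int_face s) measS s * dphi n s * u n K s.
End Scheme.

(* Main.v *)
Require Import Defs.
From mathcomp.algebra_tactics Require Import ring lra.
Import Order.TTheory GRing.Theory Num.Theory.
Import numFieldNormedType.Exports.
Local Open Scope classical_set_scope.
Local Open Scope ring_scope.


Lemma ln_le_sub1 {R : realType} (x : R) : 0 < x -> ln x <= x - 1.
Proof. move=> x0; have := @le_ln1Dx R (x - 1); rewrite (_ : 1 + (x - 1) = x); [apply; lra | ring]. Qed.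

Lemma derive1_phirho {R : realType} (x : R) : 0 < x -> derive1 (@phirho R) x = ln x + 1.
Proof.
move=> x0; rewrite derive1E.
have h : is_derive x 1 (id * (@ln R) : R -> R) (id x *: x^-1 + ln x *: 1).
  apply: is_deriveM; exact: is_derive1_ln.
have -> : (@phirho R) = (id * (@ln R) : R -> R) by [].
rewrite derive_val.
by rewrite /GRing.scale /= mulr1 divff ?gt_eqF // addrC.
Qed.

Lemma ln_div_le {R : realType} (x y : R) : 0 < x -> 0 < y -> x * (ln y - ln x) <= y - x.
Proof.
move=> x0 y0; have := @ln_le_sub1 _ (y / x) (divr_gt0 y0 x0).
rewrite ln_div ?posrE // => H.
have := ler_wpM2l (ltW x0) H; move=> K; apply: (le_trans K); rewrite le_eqVlt; apply/orP; left; apply/eqP.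
by rewrite mulrBr mulr1 mulrCA divff ?gt_eqF // mulr1.
Qed.

Lemma h_bound_le {R : realType} (a b s : R) : 0 < a -> a <= b -> a <= s <= b ->
  `| s * ln s - s * ((ln a + ln b) / 2) - s + (a + b) / 2 |
     <= ((ln b - ln a) / 2 + 1 / 2) * (b - a).
Proof.
move=> a0 ab /andP[aS sb].
have b0 : 0 < b by exact: lt_le_trans a0 ab.
have s0 : 0 < s by exact: lt_le_trans a0 aS.
set l := (ln a + ln b) / 2.
set G := expR l.
have G0 : 0 < G by exact: expR_gt0.
have lnG : ln G = l by rewrite /G expRK.
have lnab : ln a <= ln b by rewrite ler_ln ?posrE.
have lnas : ln a <= ln s by rewrite ler_ln ?posrE.
have lnsb : ln s <= ln b by rewrite ler_ln ?posrE.
have aG : a <= G by rewrite -ler_ln ?posrE // lnG /l; lra.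
have Gb : G <= b by rewrite -ler_ln ?posrE // lnG /l; lra.
have P1 := @ln_div_le _ s G s0 G0. rewrite lnG in P1.
have P2 := @ln_div_le _ G s G0 s0. rewrite lnG in P2.
have Q : (s - G) * (ln s - l) <= (b - a) * ((ln b - ln a) / 2).
  apply: le_trans (ler_norm _) _; rewrite normrM.
  apply: ler_pM => //.
  - by apply/ler_normlP; split; lra.
  - by apply/ler_normlP; rewrite /l; split; lra.
apply/ler_normlP; split.
- have : 0 <= (ln b - ln a) / 2 * (b - a) by apply: mulr_ge0; lra.
  nra.
- nra.
Qed.

Lemma inI_cases {R : realType} (a b x : R) : inI a b x <-> (a <= x <= b) \/ (b <= x <= a).
Proof.
rewrite /inI /Num.min /Num.max; case: (ltP a b) => h.
- split; [by left | case=> /andP[h1 h2]; apply/andP; split; lra].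
- split; [by right | case=> /andP[h1 h2]; apply/andP; split; lra].
Qed.

Lemma dphi_core {R : realType} (a b c s : R) : 0 < a -> 0 < b ->
  phirho a + (ln a + 1) * (c - a) = phirho b + (ln b + 1) * (c - b) ->
  inI a b s ->
  `| phirho a - phirho s + (ln a + 1) * (c - a) + 2^-1 * ((ln a + 1) + (ln b + 1)) * (s - c) |
    <= (`|ln b - ln a| / 2 + 1 / 2) * `|b - a|.
Proof.
move=> a0 b0 E /inI_cases hs.
have -> : phirho a - phirho s + (ln a + 1) * (c - a) + 2^-1 * ((ln a + 1) + (ln b + 1)) * (s - c)
  = - (s * ln s - s * ((ln a + ln b) / 2) - s + (a + b) / 2).
  have key : forall X Y : R, X = Y ->
    phirho a - phirho s + (ln a + 1) * (c - a) + 2^-1 * ((ln a + 1) + (ln b + 1)) * (s - c)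
    = - (s * ln s - s * ((ln a + ln b) / 2) - s + (a + b) / 2)
      + ((phirho a + (ln a + 1) * (c - a)) - (phirho b + (ln b + 1) * (c - b))) / 2.
    by move=> _ _ _; rewrite /phirho; field.
  by rewrite (key _ _ E) E subrr mul0r addr0.
rewrite normrN; case: hs => /andP[h1 h2].
- have ab : a <= b by exact: le_trans h2.
  rewrite (ger0_norm (_ : 0 <= ln b - ln a)); last by rewrite subr_ge0 ler_ln ?posrE.
  rewrite (ger0_norm (_ : 0 <= b - a)); last by rewrite subr_ge0.
  by apply: h_bound_le => //; rewrite h1 h2.
- have ba : b <= a by exact: le_trans h2.
  rewrite (distrC (ln b)) (distrC b).
  rewrite (ger0_norm (_ : 0 <= ln a - ln b)); last by rewrite subr_ge0 ler_ln ?posrE.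
  rewrite (ger0_norm (_ : 0 <= a - b)); last by rewrite subr_ge0.
  rewrite (addrC (ln a)) (addrC a).
  by apply: h_bound_le => //; rewrite h1 h2.
Qed.

Lemma xKL_spec {R : realType} (a b : R) : 0 < a -> 0 < b ->
  let c := xKL (@phirho R) (derive1 (@phirho R)) a b in
  inI a b c /\ phirho a + (ln a + 1) * (c - a) = phirho b + (ln b + 1) * (c - b).
Proof.
move=> a0 b0 /=; rewrite /xKL.
have [->|ab] := eqVneq a b.
  split; first by apply/inI_cases; left; rewrite lexx.
  by [].
set P := [set x | _].
have : P (xget a P).
  apply: xgetPex.
  have lnab : ln b - ln a != 0.
    rewrite subr_eq0; apply/negP => /eqP h; move/eqP: ab; apply.
    by apply: (@ln_inj R); rewrite ?posrE.
  exists ((b - a) / (ln b - ln a)); rewrite /P /=.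
  rewrite !derive1_phirho //; split; last first.
    rewrite /phirho.
    by field.
  apply/inI_cases.
  have P1 := @ln_div_le _ a b a0 b0. have P2 := @ln_div_le _ b a b0 a0.
  case: (leP a b) => h.
  - have ab' : a < b by rewrite lt_neqAle ab h.
    have d0 : 0 < ln b - ln a by rewrite subr_gt0 ltr_ln ?posrE.
    left; apply/andP; split.
    + by rewrite ler_pdivlMr //.
    + by rewrite ler_pdivrMr //; lra.
  - have d0 : 0 < ln a - ln b by rewrite subr_gt0 ltr_ln ?posrE.
    have -> : (b - a) / (ln b - ln a) = (a - b) / (ln a - ln b).
      by rewrite -mulrNN opprB -invrN opprB.
    right; apply/andP; split.
    + by rewrite ler_pdivlMr //.
    + by rewrite ler_pdivrMr //; lra.
rewrite /P /= !derive1_phirho //.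
Qed.

Lemma inI_sub {R : realType} (a b c s : R) : inI a b c -> (inI a c s \/ inI b c s) -> inI a b s.
Proof.
move=> /inI_cases hc hs; apply/inI_cases.
case: hs => /inI_cases hs; case: hc => /andP[h1 h2]; case: hs => /andP[h3 h4];
  (try by left; apply/andP; split; lra); (try by right; apply/andP; split; lra).
Qed.

Lemma ln_range {R : realType} (M x : R) : 0 < x -> x <= M -> x^-1 <= M -> `|ln x| <= ln M.
Proof.
move=> x0 xM ixM.
have M0 : 0 < M by exact: lt_le_trans x0 xM.
apply/ler_normlP; split.
- have : ln x^-1 <= ln M by rewrite ler_ln ?posrE ?invr_gt0.
  rewrite lnV ?posrE //; lra.
- by rewrite ler_ln ?posrE.
Qed.

Lemma phinf_lb {R : realType} (M : R) : 1 < M -> 1 + ln M <= phinf M.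
Proof.
move=> M1; have M0 : 0 < M by exact: lt_trans ltr01 M1.
have lnM0 : 0 <= ln M by apply: ln_ge0; exact: ltW.
rewrite /phinf; apply: ub_le_sup.
- exists (1 + ln M) => r [z [/andP[z1 z2] ->]].
  have z0 : 0 < z by apply: lt_le_trans z1; rewrite invr_gt0.
  rewrite derive1_phirho //.
  have : `|ln z| <= ln M.
    apply: ln_range => //.
    by rewrite -[M]invrK lef_pV2 ?posrE ?invr_gt0.
  move=> /ler_normlP [h1 h2]; apply/ler_normlP; split; lra.
- have hM' : `|derive1 (@phirho R) M| = 1 + ln M.
    rewrite derive1_phirho // ger0_norm; first by rewrite addrC.
    by apply: addr_ge0.
  exists M; split; last by rewrite hM'.
  apply/andP; split; last exact: lexx.
  apply: le_trans (ltW M1); rewrite invf_le1 //; exact: ltW.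
Qed.

Lemma dphi_bound {R : realType} (d : nat) (m : mesh R d) (rho : nat -> cell m -> R)
  (rhos : nat -> face m -> R) (n : nat) (s : face m) (M : R) :
  1 < M -> 0 < rho n (fK s) -> 0 < rho n (sigL s) ->
  rho n (fK s) <= M -> (rho n (fK s))^-1 <= M ->
  rho n (sigL s) <= M -> (rho n (sigL s))^-1 <= M ->
  (inI (rho n (fK s)) (rhoKL rho n s) (rhos n s) \/
   inI (rho n (sigL s)) (rhoKL rho n s) (rhos n s)) ->
  `|dphi rho rhos n s| <= phinf M * `|rho n (sigL s) - rho n (fK s)|.
Proof.
move=> M1 a0 b0 aM iaM bM ibM hs.
rewrite /dphi /=.
have [hc E] := xKL_spec _ _ a0 b0.
rewrite -/(rhoKL rho n s) in hc E.
rewrite !derive1_phirho //.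
apply: le_trans (dphi_core _ _ _ _ a0 b0 E (inI_sub _ _ _ _ hc hs)) _.
apply: ler_wpM2r; first exact: normr_ge0.
have la := ln_range _ _ a0 aM iaM; have lb := ln_range _ _ b0 bM ibM.
have := phinf_lb _ M1.
have : `|ln (rho n (sigL s)) - ln (rho n (fK s))| <= `|ln (rho n (sigL s))| + `|ln (rho n (fK s))|.
  exact: ler_normB.
lra.
Qed.


Lemma cs_sum {R : realType} (n : nat) (a b : 'I_n -> R) :
  (\sum_i a i * b i) ^+ 2 <= (\sum_i a i ^+ 2) * (\sum_i b i ^+ 2).
Proof.
set A := \sum_i a i ^+ 2; set B := \sum_i b i ^+ 2; set C := \sum_i a i * b i.
have A0 : 0 <= A by apply: sumr_ge0 => i _; exact: sqr_ge0.
have B0 : 0 <= B by apply: sumr_ge0 => i _; exact: sqr_ge0.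
have key t : 0 <= A * t ^+ 2 + 2 * C * t + B.
  have -> : A * t ^+ 2 + 2 * C * t + B = \sum_i (a i * t + b i) ^+ 2.
    rewrite /A /B /C mulr_suml mulr_sumr mulr_suml -!big_split /=.
    by apply: eq_bigr => i _; ring.
  by apply: sumr_ge0 => i _; exact: sqr_ge0.
have [Az|Ap] := eqVneq A 0.
  have ai : forall i, a i = 0.
    move=> i; apply/eqP; rewrite -sqrf_eq0; apply/eqP.
    by apply: (psumr_eq0P (P := predT) (fun i _ => sqr_ge0 (a i)) Az).
  have -> : C = 0 by rewrite /C big1 // => i _; rewrite ai mul0r.
  by rewrite Az expr0n /= mul0r.
have A0' : 0 < A by rewrite lt_def Ap A0.
have := key (- C / A).
have -> : A * (- C / A) ^+ 2 + 2 * C * (- C / A) + B = B - C ^+ 2 / A.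
  by field.
rewrite subr_ge0 ler_pdivrMr // => h.
by rewrite mulrC.
Qed.

Lemma abs_cs {R : realType} (n : nat) (a b : 'I_n -> R) :
  `|\sum_i a i * b i| <= Num.sqrt (\sum_i a i ^+ 2) * Num.sqrt (\sum_i b i ^+ 2).
Proof.
rewrite -sqrtrM; last by apply: sumr_ge0 => i _; exact: sqr_ge0.
rewrite -sqrtr_sqr ler_sqrt ?cs_sum //.
by apply: mulr_ge0; apply: sumr_ge0 => i _; exact: sqr_ge0.
Qed.

Lemma pair_sum {R : realType} (d : nat) (F : 'I_d -> 'rV[R]_d) :
  ((\sum_j F j, 0) : 'rV[R]_d * R) = \sum_j ((F j, 0) : 'rV[R]_d * R).
Proof.
elim/big_rec2: _ => // i y1 y2 _ <-.
by rewrite -[RHS]/(F i + y2, 0 + 0) addr0.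
Qed.

Lemma dir_decomp {R : realType} (d : nat) (psi : 'rV[R]_d * R -> R) z (v : 'rV[R]_d) :
  differentiable psi z ->
  'D_((v, 0) : 'rV[R]_d * R) psi z =
    \sum_i v ord0 i * 'D_((@ebase R d i, 0) : 'rV[R]_d * R) psi z.
Proof.
move=> dz; rewrite deriveE //.
have -> : ((v, 0) : 'rV[R]_d * R) = \sum_i v ord0 i *: ((@ebase R d i, 0) : 'rV[R]_d * R).
  rewrite {1}[v]matrix_sum_delta big_ord1 pair_sum.
  apply: eq_bigr => i _.
  by rewrite -[RHS]/(v ord0 i *: ebase R i, v ord0 i * 0) mulr0.
rewrite linear_sum; apply: eq_bigr => i _.
by rewrite linearZ deriveE.
Qed.

Lemma psi_lip {R : realType} (d : nat) (psi : 'rV[R]_d * R -> R) (S : set 'rV[R]_d) (t g : R)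
  (x y : 'rV[R]_d) :
  (forall z, differentiable psi z) ->
  (forall l : R, 0 <= l <= 1 -> S (x + l *: (y - x))) ->
  (forall z, S z -> gradnorm psi z t <= g) ->
  `|psi (y, t) - psi (x, t)| <= g * enorm (y - x).
Proof.
move=> dpsi seg gS.
set v := y - x.
pose F := fun l : R => psi (x + l *: v, t).
pose df := fun l : R => 'D_((v, 0) : 'rV[R]_d * R) psi (x + l *: v, t).
have HF (l : R) : is_derive l (1 : R) F (df l).
  have Q : (fun h : R => h^-1 *: ((F \o shift l) (h *: (1 : R)) - F l)) =
     (fun h : R => h^-1 *: ((psi \o shift ((x + l *: v, t) : 'rV[R]_d * R))
        (h *: ((v, 0) : 'rV[R]_d * R)) - psi (x + l *: v, t))).
    apply/funext => h /=; rewrite /F /shift /=.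
    congr (_ *: (psi _ - _)).
    rewrite -[RHS]/(h *: v + (x + l *: v), h * 0 + t) mulr0 add0r.
    congr pair.
    by rewrite [h *: 1]mulr1 scalerDl addrCA.
  split.
  - by rewrite /derivable Q; exact: diff_derivable.
  - by rewrite /derive Q.
have [c c01 hc] : exists2 c, c \in `[0, 1]%R & F 1 - F 0 = df c * (1 - 0).
  apply: (MVT_segment ler01 (fun l _ => HF l)).
  apply: derivable_within_continuous => l lin.
  by have := HF l => -[].
have eF1 : F 1 = psi (y, t) by rewrite /F scale1r /v addrC subrK.
have eF0 : F 0 = psi (x, t) by rewrite /F scale0r addr0.
rewrite -eF1 -eF0 hc subr0 mulr1 /df dir_decomp //.
apply: le_trans; first exact: abs_cs.
rewrite [g * _]mulrC; apply: ler_wpM2l; first exact: sqrtr_ge0.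
have c01' : 0 <= c <= 1 by move: c01; rewrite in_itv.
exact: (gS _ (seg c c01')).
Qed.

Lemma closure_bound {R : realType} (d : nat) (psi : 'rV[R]_d * R -> R) (t : R)
  (A : set 'rV[R]_d) (x p : 'rV[R]_d) (C : R) :
  (forall z, differentiable psi z) ->
  closure A p ->
  (forall q, A q -> `|psi (q, t) - psi (x, t)| <= C) ->
  `|psi (p, t) - psi (x, t)| <= C.
Proof.
move=> dpsi cl hA.
have cf : {for p, continuous (fun q : 'rV[R]_d => psi (q, t))}.
  apply: (@continuous_comp _ _ _ (fun q : 'rV[R]_d => ((q, t) : 'rV[R]_d * R)) psi).
  - have h := @cvg_pair _ _ _ (nbhs p) (nbhs p) (nbhs t) _ _ _ id (fun _ => t) cvg_id (cvg_cst t).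
    exact: h.
  - exact: differentiable_continuous.
apply/ler_addgt0Pr => e e0.
have h1 := @cvgr_dist_lt _ _ _ (nbhs p) _ (fun q : 'rV[R]_d => psi (q, t)) (psi (p, t)) cf e e0.
have [q [Aq hq]] := cl _ (h1 _).
rewrite /= in hq.
have := hA q Aq.
have : `|psi (p, t) - psi (x, t)| <= `|psi (p, t) - psi (q, t)| + `|psi (q, t) - psi (x, t)|.
  by rewrite (le_trans _ (ler_normD _ _)) // addrA subrK.
move: hq; lra.
Qed.


Lemma le_bigmaxr {R : realType} (I : finType) (F : I -> R) i : F i <= \big[Num.max/0]_j F j.
Proof.
rewrite (bigD1 i) //=; set r := \big[_/_]_(j | _) _.
rewrite /Num.max; case: ltP => h //; exact: ltW.
Qed.

Lemma bigmaxr_ge0 {R : realType} (I : finType) (F : I -> R) : 0 <= \big[Num.max/0]_j F j.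
Proof.
elim/big_rec: _ => // i y _ hy.
rewrite /Num.max; case: ltP => // h; exact: (le_trans hy).
Qed.

Lemma comp_le_norm {R : realType} (d : nat) (v : 'rV[R]_d) i : `|v ord0 i| <= `|v|.
Proof.
have -> : `|v| = mx_norm v by [].
rewrite mx_normrE.
exact: (le_bigmaxr _ (fun ij : ((ordinal 1) * (ordinal d))%type => `|v ij.1 ij.2|) (ord0, i)).
Qed.

Lemma sqrt_le1D {R : realType} (X : R) : 0 <= X -> Num.sqrt X <= 1 + X.
Proof.
move=> X0; rewrite -[X in _ <= X]ger0_norm; last lra.
rewrite -sqrtr_sqr ler_sqrt; [nra | exact: sqr_ge0].
Qed.

Lemma enorm_ub {R : realType} (d : nat) (x y : 'rV[R]_d) (B : R) :
  `|x| <= B -> `|y| <= B ->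
  enorm (x - y) <= 1 + d%:R * (2 * B) ^+ 2.
Proof.
move=> hx hy; rewrite /enorm.
have S0 : 0 <= \sum_(i < d) (x - y) ord0 i ^+ 2 by apply: sumr_ge0 => i _; exact: sqr_ge0.
apply: le_trans (sqrt_le1D _ S0) _.
rewrite lerD2l.
have -> : d%:R * (2 * B) ^+ 2 = \sum_(i < d) (2 * B) ^+ 2.
  by rewrite sumr_const card_ord mulr_natl.
apply: ler_sum => i _; rewrite !mxE.
have h1 := comp_le_norm _ x i; have h2 := comp_le_norm _ y i.
have : `|x ord0 i - y ord0 i| <= 2 * B.
  by apply: le_trans (ler_normB _ _) _; lra.
move/ler_normlP => [h3 h4].
have B0 : 0 <= B by apply: le_trans hx.
nra.
Qed.

Lemma diam_ub {R : realType} (d : nat) (m : mesh R d) (K : cell m) (x y : 'rV[R]_d) :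
  cellset K x -> cellset K y -> enorm (x - y) <= diam K.
Proof.
move=> hx hy; rewrite /diam.
have [B [_ HB]] := Omega_bounded m.
have hB : Omega m `<=` [set z | `|z| <= B + 1] by apply: HB; lra.
apply: ub_le_sup; last by exists x, y.
exists (1 + d%:R * (2 * (B + 1)) ^+ 2) => r [x' [y' [hx' [hy' ->]]]].
apply: enorm_ub.
- exact: hB (cell_sub hx').
- exact: hB (cell_sub hy').
Qed.

Lemma diam_le_hM {R : realType} (d : nat) (m : mesh R d) (K : cell m) : diam K <= hM m.
Proof. exact: (le_bigmaxr _ (fun K : cell m => diam K)). Qed.

Lemma hM_ge0 {R : realType} (d : nat) (m : mesh R d) : 0 <= hM m.
Proof. exact: bigmaxr_ge0. Qed.


Lemma rearrange {R : realType} (d : nat) (m : mesh R d) (F : cell m -> face m -> R) (w : cell m -> R) :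
  (forall s L, fL s = Some L -> F L s = - F (fK s) s) ->
  \sum_K \sum_(s | faceof K s && int_face s) F K s * w K =
  \sum_(s | int_face s) F (fK s) s * (w (fK s) - w (sigL s)).
Proof.
move=> Fanti.
under eq_bigr => K _ do rewrite big_mkcond /=.
rewrite exchange_big /= [RHS]big_mkcond /=.
apply: eq_bigr => s _.
rewrite /int_face /sigL.
case E: (fL s) => [L|] /=; last first.
  apply: big1 => K _; rewrite /faceof E andbF //.
rewrite (bigD1 (fK s)) //=.
rewrite /faceof eqxx /=.
have LK : L != fK s.
  apply/eqP => h; have := @face_two _ _ m s; rewrite E h; by apply.
rewrite (bigD1 L) /=; last exact: LK.
rewrite E eqxx orbT /=.
rewrite big1 ?addr0; last first.
  move=> K /andP[KfK KL].
  have -> : (fK s == K) = false by apply/negbTE; rewrite eq_sym.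
  have -> : (Some L == Some K) = false by apply/negbTE; apply: contra KL => /eqP [->].
  by [].
by rewrite (Fanti s L E); ring.
Qed.

Lemma cell_bound {R : realType} (d : nat) (m : mesh R d) (psi : 'rV[R]_d * R -> R) (t g : R)
  (K : cell m) (q : 'rV[R]_d) :
  (forall z, differentiable psi z) ->
  (forall z, Omega m z -> gradnorm psi z t <= g) -> 0 <= g ->
  closure (cellset K) q ->
  `|psi (q, t) - psi (center K, t)| <= g * hM m.
Proof.
move=> dpsi gb g0 cq.
apply: (closure_bound _ _ _ (cellset K)) => // q' Kq'.
have seg : forall l : R, 0 <= l <= 1 -> cellset K (center K + l *: (q' - center K)).
  move=> l /andP[l0 l1].
  have := cell_convex Kq' (center_in K) (l := l); rewrite l0 l1 => /(_ isT).
  congr (cellset K _).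
  by rewrite scalerBl scale1r scalerBr [RHS]addrCA.
have gS : forall z, cellset K z -> gradnorm psi z t <= g.
  by move=> z Kz; apply: gb; exact: cell_sub Kz.
apply: le_trans (psi_lip _ _ (cellset K) t g (center K) q' dpsi seg gS) _.
apply: ler_wpM2l => //.
apply: le_trans (diam_le_hM _ _ K).
exact: (diam_ub _ _ K q' (center K) Kq' (center_in K)).
Qed.

Theorem lemma2p7 (R : realType) (d : nat) (m : mesh R d) (T : R) (N : nat)
  (rho : nat -> cell m -> R) (rhos : nat -> face m -> R)
  (u : nat -> cell m -> face m -> R) (M : R) :
  0 < T -> (0 < N)%N ->
  (forall n K, (n <= N)%N -> 0 < rho n K) ->
  (forall n s, (n <= N)%N ->
     (forall L, fL s = Some L -> u n L s = - u n (fK s) s) /\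
     (fL s = None -> u n (fK s) s = 0)) ->
  (forall n s, (n < N)%N -> int_face s ->
     if 0 <= u n.+1 (fK s) s
     then inI (rho n.+1 (fK s)) (rhoKL rho n.+1 s) (rhos n.+1 s)
     else inI (rho n.+1 (sigL s)) (rhoKL rho n.+1 s) (rhos n.+1 s)) ->
  1 < M ->
  (forall n K, (n <= N)%N -> rho n K <= M /\ (rho n K)^-1 <= M) ->
  (forall n K s, (n <= N)%N -> faceof K s -> `|u n K s| <= M) ->
  (dual_norm T N (dR rho rhos u) <=
     (3 * M * phinf M * BVnorm T N rho * hM m)%:E)%E.
Proof.
move=> T0 N0 rpos uanti rhosI M1 rM uM.
have M0 : 0 < M by exact: lt_trans ltr01 M1.
have phi0 : 0 < phinf M.
  have := phinf_lb _ M1; have : 0 <= ln M by apply: ln_ge0; exact: ltW.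
  lra.
have dt0 : 0 <= T / N%:R by apply: divr_ge0; [exact: ltW | exact: ler0n].
set S := fun n => \sum_(s : face m | int_face s) measS s * `|rho n (sigL s) - rho n (fK s)|.
have S0 : forall n, 0 <= S n.
  move=> n; apply: sumr_ge0 => s _; apply: mulr_ge0; [exact: ltW (measS_pos s) | exact: normr_ge0].
have BV0 : 0 <= BVnorm T N rho.
  by apply: sumr_ge0 => n _; apply: mulr_ge0 => //; exact: S0.
have B0 : 0 <= 3 * M * phinf M * BVnorm T N rho * hM m.
  apply: mulr_ge0; last exact: hM_ge0.
  apply: mulr_ge0 => //; apply: mulr_ge0; last exact: ltW.
  apply: mulr_ge0; [lra | exact: ltW].
rewrite /dual_norm; apply: ub_ereal_sup => _ [psi [[sm [t0 [t0T psi0]]] [Gp ->]]].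
have dpsi : forall z, differentiable psi z := fun z => sm [::] z.
move: Gp; case EG: (gradsup m T psi) => [g| |] Gp //=; last by rewrite lee_fin invr0 mulr0.
rewrite lte_fin in Gp; rewrite lee_fin ler_pdivrMr //.
have gb : forall t, 0 < t < T -> forall z, Omega m z -> gradnorm psi z t <= g.
  move=> t tT z Oz; rewrite -lee_fin -EG; apply: ereal_sup_ubound.
  by exists z, t.
set c := M * phinf M * g * hM m.
have c0 : 0 <= c.
  apply: mulr_ge0; last exact: hM_ge0.
  apply: mulr_ge0; last exact: ltW.
  apply: mulr_ge0; exact: ltW.
have inner : forall n, (1 <= n <= N)%N ->
    `|\sum_K measK K * dR rho rhos u n K * psi (center K, n%:R * (T / N%:R))|
    <= 2 * c * S n.
  move=> n /andP[n1 nN].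
  set t := n%:R * (T / N%:R).
  have hpsi : forall s : face m, int_face s ->
      `|psi (center (fK s), t) - psi (center (sigL s), t)| <= 2 * g * hM m.
    move=> s ints.
    case: (ltnP n N) => nN'.
    - have t0' : 0 < t < T.
        have N0' : (0 : R) < N%:R by rewrite ltr0n.
        apply/andP; split.
        + apply: mulr_gt0; first by rewrite ltr0n.
          exact: divr_gt0.
        + rewrite /t mulrCA -[X in _ < X]mulr1 ltr_pM2l // ltr_pdivrMr // mul1r.
          by rewrite ltr_nat.
      move: ints; rewrite /int_face /sigL; case E: (fL s) => [L|] // _ /=.
      have [p Fp] := face_ne s.
      have pK := face_subK Fp.
      have pL := face_subL E Fp.
      have b1 := cell_bound _ _ psi t g (fK s) p dpsi (gb t t0') (ltW Gp) pK.
      have b2 := cell_bound _ _ psi t g L p dpsi (gb t t0') (ltW Gp) pL.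
      have : `|psi (center (fK s), t) - psi (center L, t)| <=
             `|psi (p, t) - psi (center (fK s), t)| + `|psi (p, t) - psi (center L, t)|.
        rewrite (_ : psi (center (fK s), t) - psi (center L, t) =
           (psi (p, t) - psi (center L, t)) - (psi (p, t) - psi (center (fK s), t))); last by ring.
        by rewrite [X in _ <= X]addrC; exact: ler_normB.
      lra.
    - have nE : n = N by apply/eqP; rewrite eqn_leq nN nN'.
      have tT : t = T.
        rewrite /t nE mulrCA divff ?mulr1 //.
        by rewrite pnatr_eq0 -lt0n.
      rewrite tT !psi0 ?subrr ?normr0; try exact: ltW.
      apply: mulr_ge0; last exact: hM_ge0.
      apply: mulr_ge0; [lra | exact: ltW].
  have eqs : \sum_K measK K * dR rho rhos u n K * psi (center K, t) =
      \sum_K \sum_(s | faceof K s && int_face s)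
         (measS s * dphi rho rhos n s * u n K s) * psi (center K, t).
    apply: eq_bigr => K _.
    rewrite /dR mulrA mulfV ?gt_eqF ?measK_pos // mul1r mulr_suml.
    by [].
  rewrite eqs (rearrange _ _ (fun K s => measS s * dphi rho rhos n s * u n K s)
                (fun K => psi (center K, t))); last first.
    by move=> s L E; have [h _] := uanti n s nN; rewrite (h L E); ring.
  rewrite /S mulr_sumr; apply: le_trans (ler_norm_sum _ _ _) _.
  apply: ler_sum => s ints.
  have hd : `|dphi rho rhos n s| <= phinf M * `|rho n (sigL s) - rho n (fK s)|.
    have [aM iaM] := rM n (fK s) nN.
    have [bM ibM] := rM n (sigL s) nN.
    apply: dphi_bound => //; try exact: rpos.
    have n1' : (n.-1 < N)%N by rewrite (leq_trans _ nN) // ltn_predL.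
    have := rhosI n.-1 s n1' ints; rewrite prednK //.
    by case: ifP => _ h; [left | right].
  have hu : `|u n (fK s) s| <= M.
    by apply: uM => //; rewrite /faceof eqxx.
  have hp := hpsi s ints.
  rewrite !normrM (ger0_norm (ltW (measS_pos s))).
  have h12 := ler_pM (normr_ge0 _) (normr_ge0 _) hd hu.
  have h123 := ler_pM (mulr_ge0 (normr_ge0 _) (normr_ge0 _)) (normr_ge0 _) h12 hp.
  have h := ler_wpM2l (ltW (measS_pos s)) h123.
  rewrite !mulrA in h.
  apply: le_trans h _.
  rewrite le_eqVlt; apply/orP; left; apply/eqP; rewrite /c; ring.
rewrite /pairing.
apply: le_trans (_ : _ <= \sum_(1 <= n < N.+1) (T / N%:R) * (2 * c * S n)) _.
  apply: ler_sum_nat => n /andP[n1 nN].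
  apply: ler_wpM2l => //.
  apply: le_trans (ler_norm _) _.
  by apply: inner; rewrite n1 -ltnS nN.
apply: le_trans (_ : _ <= \sum_(0 <= n < N.+1) (T / N%:R) * (3 * c * S n)) _.
  rewrite [X in _ <= X](big_ltn (ltn0Sn N)).
  apply: ler_wpDl.
    by apply: mulr_ge0 => //; apply: mulr_ge0 => //; apply: mulr_ge0 => //; lra.
  apply: ler_sum_nat => n _.
  apply: ler_wpM2l => //.
  apply: ler_wpM2r; first exact: S0.
  apply: ler_wpM2r => //; lra.
rewrite le_eqVlt; apply/orP; left; apply/eqP.
have -> : 3 * M * phinf M * BVnorm T N rho * hM m * g = (3 * c) * BVnorm T N rho.
  by rewrite /c; ring.
rewrite /BVnorm mulr_sumr; apply: eq_bigr => n _.
rewrite /S; ring.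
Qed.
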